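(* Let $p$ be a prime, let $N,K,T,M,h$ be positive integers with $K\mid M$, and let $\beta_1,\ldots,\beta_{K+T}\in\mathbb{F}_p$ be pairwise distinct and $\alpha_1,\ldots,\alpha_N\in\mathbb{F}_p$ be pairwise distinct with $\{\alpha_1,\ldots,\alpha_N\}\cap\{\beta_1,\ldots,\beta_{K+T}\}=\emptyset$. For $k\in[K+T]$ let $L_k(x)=\prod_{\ell\in[K+T]\setminus\{k\}}\frac{x-\beta_\ell}{\beta_k-\beta_\ell}$. For each client $n\in[N]$ let $D_n,d_n$ be positive integers, let $\overline{X}_n^i\in\mathbb{F}_p^{M\times d_n}$ and $\overline{W}_n^i\in\mathbb{F}_p^{d_n\times h}$ for $i\in[D_n]$, and for $k\in[K]$ let $\overline{X}_{n,k}^i\in\mathbb{F}_p^{(M/K)\times d_n}$ be the $k$-th block of $M/K$ consecutive rows of $\overline{X}_n^i$. Let $Z_{n,k}^i\in\mathbb{F}_p^{(M/K)\times d_n}$ and $V_{n,k}^i\in\mathbb{F}_p^{d_n\times h}$ ($k=K+1,\ldots,K+T$) be arbitrary (mask) matrices, and define the polynomials $$F_n^i(x)=\sum_{k=1}^K\overline{X}_{n,k}^iL_k(x)+\sum_{k=K+1}^{K+T}Z_{n,k}^iL_k(x),\qquad G_n^i(x)=\sum_{k=1}^K\overline{W}_{n}^iL_k(x)+\sum_{k=K+1}^{K+T}V_{n,k}^iL_k(x).$$ Fix a batch $\mathcal{B}\subseteq[M/K]$ of row indices, and for a matrix $A$ with $M/K$ rows let $A^{(\mathcal{B})}$ denote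 its submatrix of rows indexed by $\mathcal{B}$. For each $n'\in[N]$ define the coded result $$\widetilde{H}_{n'}^{(\mathcal{B})}=\sum_{n=1}^N\sum_{i=1}^{D_n}F_n^{i}(\alpha_{n'})^{(\mathcal{B})}\,G_n^i(\alpha_{n'}),$$ and for each $n$ let $\overline{H}_n^{(\mathcal{B})}$ be the vertical stacking over $k=1,\ldots,K$ of the matrices $\sum_{i=1}^{D_n}(\overline{X}_{n,k}^{i})^{(\mathcal{B})}\overline{W}_n^i$. Then for every subset $\mathcal{U}\subseteq[N]$ with $|\mathcal{U}|\ge 2(K+T-1)+1$ (i.e., in the presence of up to $N-2(K+T-1)-1$ straggling clients whose results are missing), the sum $\overline{H}^{(\mathcal{B})}=\sum_{n=1}^N\overline{H}_n^{(\mathcal{B})}$ can be exactly recovered from $\{\widetilde{H}_{n'}^{(\mathcal{B})}:n'\in\mathcal{U}\}$ (together with the public points $\alpha_{n'}$, $\beta_k$).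
   Context: This describes the FedVS protocol for split vertical federated learning: client $n$ holds quantized local data (the $i$-th matrix $\overline{X}_n^i$ being the quantized $i$-th elementwise power of its data) and a quantized polynomial-network local model $(\overline{W}_n^1,\ldots,\overline{W}_n^{D_n})$; the pair $\widetilde{X}_{n,n'}=(F_n^i(\alpha_{n'}))_i$, $\widetilde{W}_{n,n'}=(G_n^i(\alpha_{n'}))_i$ is the Lagrange-coded secret share sent by client $n$ to client $n'$, and $\widetilde{H}^{(\mathcal{B})}_{n'}$ is what client $n'$ uploads to the server. $[N]=\{1,\ldots,N\}$. *)

(* Defs.v *)
From mathcomp Require Import all_boot all_order all_algebra.
Set Implicit Arguments. Unset Strict Implicit. Unset Printing Implicit Defensive.
Import GRing.Theory.
Local Open Scope ring_scope.

Definition lagrange (F : fieldType) (n : nat) (beta : 'I_n -> F) (k : 'I_n) (x : F) : F :=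
  \prod_(l < n | l != k) ((x - beta l) / (beta k - beta l)).

(* k-th block (k counted from 0) of m consecutive rows of an (Mr x d) matrix. *)
Definition row_block (F : fieldType) (Mr m d : nat) (A : 'M[F]_(Mr, d)) (k : nat)
  : 'M[F]_(m, d) :=
  \matrix_(r < m, j < d)
    (if @insub _ (fun q => q < Mr)%N _ (k * m + r)%N is Some q then A q j else 0).

Definition subrows (F : fieldType) (m d : nat) (B : {set 'I_m}) (A : 'M[F]_(m, d))
  : 'M[F]_(#|B|, d) :=
  \matrix_(i < #|B|, j < d) A (enum_val i) j.

Lemma stack_div_lt (K b : nat) (q : 'I_(K * b)) : (q %/ b < K)%N.
Proof.
case: b q => [|b] q; first by case: q => q; rewrite muln0.
by rewrite ltn_divLR // ltn_ord.
Qed.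

Lemma stack_mod_lt (K b : nat) (q : 'I_(K * b)) : (q %% b < b)%N.
Proof.
case: b q => [|b] q; first by case: q => q; rewrite muln0.
by rewrite ltn_mod.
Qed.

Definition stackK (F : fieldType) (K b h : nat) (f : 'I_K -> 'M[F]_(b, h))
  : 'M[F]_(K * b, h) :=
  \matrix_(q < K * b, j < h) f (Ordinal (stack_div_lt q)) (Ordinal (stack_mod_lt q)) j.

Section FedVS.
Variables (F : fieldType) (N K T M h : nat).
Variables (beta : 'I_(K + T) -> F) (alpha : 'I_N -> F).
Variables (D d : 'I_N -> nat).
Variables (X : forall n, 'I_(D n) -> 'M[F]_(M, d n))
          (W : forall n, 'I_(D n) -> 'M[F]_(d n, h))
          (Z : forall n, 'I_(D n) -> 'I_T -> 'M[F]_(M %/ K, d n))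
          (V : forall n, 'I_(D n) -> 'I_T -> 'M[F]_(d n, h)).

Definition Lk (k : 'I_(K + T)) (x : F) : F := lagrange beta k x.

Definition Fpoly (n : 'I_N) (i : 'I_(D n)) (x : F) : 'M[F]_(M %/ K, d n) :=
  \sum_(k < K) Lk (lshift T k) x *: row_block (M %/ K) (X i) k
  + \sum_(t < T) Lk (rshift K t) x *: Z i t.

Definition Gpoly (n : 'I_N) (i : 'I_(D n)) (x : F) : 'M[F]_(d n, h) :=
  \sum_(k < K) Lk (lshift T k) x *: W i
  + \sum_(t < T) Lk (rshift K t) x *: V i t.

Definition Htilde (B : {set 'I_(M %/ K)}) (n' : 'I_N) : 'M[F]_(#|B|, h) :=
  \sum_(n < N) \sum_(i < D n) subrows B (Fpoly i (alpha n')) *m Gpoly i (alpha n').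

Definition Hbar_n (B : {set 'I_(M %/ K)}) (n : 'I_N) : 'M[F]_(K * #|B|, h) :=
  stackK (fun k : 'I_K =>
    \sum_(i < D n) subrows B (row_block (M %/ K) (X i) k) *m W i).

Definition Hbar (B : {set 'I_(M %/ K)}) : 'M[F]_(K * #|B|, h) :=
  \sum_(n < N) Hbar_n B n.

End FedVS.

(* Main.v *)
Require Import Defs.
From mathcomp Require Import all_boot all_order all_algebra.
Set Implicit Arguments. Unset Strict Implicit. Unset Printing Implicit Defensive.
Import GRing.Theory.
Local Open Scope ring_scope.

Section PFsec.
Variable F : fieldType.

Definition PF (m : nat) (f : F -> F) :=
  exists q : {poly F}, (size q <= m)%N /\ forall x, f x = q.[x].

Lemma PF_ext m f g : (forall x, f x = g x) -> PF m g -> PF m f.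
Proof. by move=> e [q [s h]]; exists q; split => // x; rewrite e h. Qed.

Lemma PF_mono m n f : (m <= n)%N -> PF m f -> PF n f.
Proof. by move=> le [q [s h]]; exists q; split => //; apply: leq_trans le. Qed.

Lemma PF_cst m c : (0 < m)%N -> PF m (fun _ => c).
Proof.
move=> m0; exists c%:P; split; last by move=> x; rewrite hornerC.
by apply: leq_trans (size_polyC_leq1 c) _.
Qed.

Lemma PF_X : PF 2 (fun x => x).
Proof. by exists 'X; split; [rewrite size_polyX | move=> x; rewrite hornerX]. Qed.

Lemma PF_add m f g : PF m f -> PF m g -> PF m (fun x => f x + g x).
Proof.
move=> [p [sp hp]] [q [sq hq]]; exists (p + q); split.
  by apply: leq_trans (size_polyD _ _) _; rewrite geq_max sp sq.
by move=> x; rewrite hornerD hp hq.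
Qed.

Lemma PF_opp m f : PF m f -> PF m (fun x => - f x).
Proof.
move=> [p [sp hp]]; exists (- p); split; first by rewrite size_polyN.
by move=> x; rewrite hornerN hp.
Qed.

Lemma PF_mul m n f g : PF m f -> PF n g -> PF (m + n).-1 (fun x => f x * g x).
Proof.
move=> [p [sp hp]] [q [sq hq]]; exists (p * q); split.
  apply: leq_trans (size_polyMleq _ _) _.
  by rewrite -!subn1 leq_sub2r // leq_add.
by move=> x; rewrite hornerM hp hq.
Qed.

Lemma PF_sum (I : Type) (s : seq I) (P : pred I) m (G : I -> F -> F) :
  (forall i, P i -> PF m (G i)) -> PF m (fun x => \sum_(i <- s | P i) G i x).
Proof.
move=> hG; elim: s => [|i s IH].
  exists 0; split; first by rewrite size_poly0.
  by move=> x; rewrite big_nil horner0.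
case Pi: (P i).
  apply: PF_ext; first by move=> x; rewrite big_cons Pi.
  exact: PF_add (hG _ Pi) IH.
by apply: PF_ext IH => x; rewrite big_cons Pi.
Qed.

Lemma PF_prod (I : Type) (s : seq I) (P : pred I) (G : I -> F -> F) :
  (forall i, P i -> PF 2 (G i)) -> PF (count P s).+1 (fun x => \prod_(i <- s | P i) G i x).
Proof.
move=> hG; elim: s => [|i s IH].
  by apply: PF_ext (PF_cst 1 _) => // x; rewrite big_nil.
rewrite /=; case Pi: (P i).
  apply: PF_ext; first by move=> x; rewrite big_cons Pi.
  by have := PF_mul (hG _ Pi) IH; rewrite add1n.
by apply: PF_ext IH => x; rewrite big_cons Pi.
Qed.

Lemma PF_frac a b : PF 2 (fun x => (x - a) / b).
Proof.
apply: PF_ext (PF_mul (PF_add PF_X (PF_cst (- a) _)) (PF_cst b^-1 (isT : 0 < 1)%N)) => //.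
Qed.

Lemma count_neq (T : eqType) (s : seq T) x :
  uniq s -> x \in s -> count (fun y => y != x) s = (size s).-1.
Proof.
move=> us xs; have := count_predC (pred1 x) s.
have -> : count (pred1 x) s = 1%N by rewrite (count_uniq_mem x us) xs.
by rewrite add1n => <-.
Qed.

Lemma prod_delta (I : eqType) (s : seq I) (a : I -> F) u w :
  uniq s -> injective a -> w \in s ->
  \prod_(v <- s | v != u) ((a w - a v) / (a u - a v)) = (w == u)%:R.
Proof.
move=> us ia ws; have [->|wu] := eqVneq w u.
  rewrite big1 // => v vu; rewrite divff // subr_eq0.
  by apply: contra vu => /eqP /ia ->.
rewrite big_mkcond (bigD1_seq w) //= wu subrr mul0r mul0r //.
Qed.

Definition ell (I : eqType) (s : seq I) (a : I -> F) (u : I) (y : F) :=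
  \prod_(v <- s | v != u) ((y - a v) / (a u - a v)).

Lemma interp (I : eqType) (s : seq I) (a : I -> F) (q : {poly F}) y :
  uniq s -> injective a -> (size q <= size s)%N ->
  q.[y] = \sum_(u <- s) q.[a u] * ell s a u y.
Proof.
move=> us ia sq.
pose g x := q.[x] - \sum_(u <- s) q.[a u] * ell s a u x.
have Pg : PF (size s) g.
  apply: PF_add; first by exists q.
  apply: PF_opp; apply: PF_ext; first by move=> x; rewrite big_seq.
  apply: PF_sum => u us'.
  have := PF_mul (PF_cst q.[a u] (isT : 0 < 1)%N)
      (@PF_prod I s (fun v => v != u) _ (fun v _ => PF_frac (a v) (a u - a v))).
  rewrite add1n (count_neq us us') prednK; last by apply: (leq_trans _ (count_size (pred1 u) s)); rewrite (count_uniq_mem u us) us'.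
  by [].
have [r [sr hr]] := Pg.
have r0 : r = 0.
  apply/eqP; apply/negPn/negP => rn0.
  have := max_poly_roots rn0 (rs := map a s).
  rewrite size_map map_inj_uniq // us ltnNge sr => H.
  suff Hall : all (root r) (map a s) by have := H Hall isT.
  apply/allP => _ /mapP [w ws ->]; rewrite /root -hr /g.
  rewrite (bigD1_seq w) //= /ell prod_delta // eqxx mulr1 big1 ?addr0 ?subrr //.
  move=> v vw; rewrite /ell prod_delta // eq_sym (negbTE vw) mulr0 //.
by apply/eqP; rewrite -subr_eq0 -/(g y) hr r0 horner0.
Qed.

Definition MPF m r c (A : F -> 'M[F]_(r, c)) := forall i j, PF m (fun x => A x i j).

Lemma MPF_add m r c (A B : F -> 'M[F]_(r, c)) : MPF m A -> MPF m B -> MPF m (fun x => A x + B x).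
Proof. move=> hA hB i j; apply: PF_ext (PF_add (hA i j) (hB i j)) => x; by rewrite mxE. Qed.

Lemma MPF_sum (I : Type) (s : seq I) m r c (A : I -> F -> 'M[F]_(r, c)) :
  (forall k, MPF m (A k)) -> MPF m (fun x => \sum_(k <- s) A k x).
Proof.
move=> hA i j; apply: PF_ext; first by move=> x; rewrite summxE.
by apply: PF_sum => k _; apply: hA.
Qed.

Lemma MPF_scl m r c (f : F -> F) (C : 'M[F]_(r, c)) : PF m f -> MPF m (fun x => f x *: C).
Proof.
move=> hf i j; have := PF_mul hf (PF_cst (C i j) (isT : 0 < 1)%N).
by rewrite addn1 /= => H; apply: PF_ext H => x; rewrite mxE.
Qed.

Lemma MPF_mul m n r c e (A : F -> 'M[F]_(r, c)) (B : F -> 'M[F]_(c, e)) :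
  MPF m A -> MPF n B -> MPF (m + n).-1 (fun x => A x *m B x).
Proof.
move=> hA hB i j; apply: PF_ext; first by move=> x; rewrite mxE.
by apply: PF_sum => k _; apply: PF_mul.
Qed.

Lemma MPF_subrows m r c (S : {set 'I_r}) (A : F -> 'M[F]_(r, c)) :
  MPF m A -> MPF m (fun x => subrows S (A x)).
Proof. by move=> hA i j; apply: PF_ext (hA _ j) => x; rewrite mxE. Qed.

Lemma size_index_enum_ord n : size (index_enum 'I_n) = n.
Proof. by rewrite /index_enum unlock -enumT size_enum_ord. Qed.

Lemma PF_Lk K T (beta : 'I_(K + T) -> F) k : PF (K + T) (Lk beta k).
Proof.
have := @PF_prod _ (index_enum 'I_(K + T)) (fun l => l != k) _
  (fun l _ => PF_frac (beta l) (beta k - beta l)).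
rewrite (count_neq (index_enum_uniq _) (mem_index_enum _)) size_index_enum_ord.
by rewrite prednK //; case: k => k /= /(leq_ltn_trans (leq0n _)).
Qed.

Lemma Lk_delta K T (beta : 'I_(K + T) -> F) k j : injective beta ->
  Lk beta k (beta j) = (j == k)%:R.
Proof.
move=> ib; rewrite /Lk /lagrange.
rewrite /Defs.lagrange prod_delta //; apply: index_enum_uniq.
Qed.
End PFsec.

From mathcomp Require Import zify.

Theorem theorem1 (p N K T M h : nat) :
  prime p -> (0 < N)%N -> (0 < K)%N -> (0 < T)%N -> (0 < M)%N -> (0 < h)%N ->
  (K %| M)%N ->
  forall (beta : 'I_(K + T) -> 'F_p) (alpha : 'I_N -> 'F_p),
  injective beta -> injective alpha ->
  (forall (n : 'I_N) (k : 'I_(K + T)), alpha n != beta k) ->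
  forall (B : {set 'I_(M %/ K)}) (U : {set 'I_N}),
  (2 * (K + T - 1) + 1 <= #|U|)%N ->
  exists dec : ('I_N -> 'M['F_p]_(#|B|, h)) -> 'M['F_p]_(K * #|B|, h),
  forall (D d : 'I_N -> nat), (forall n, 0 < D n)%N -> (forall n, 0 < d n)%N ->
  forall (X : forall n, 'I_(D n) -> 'M['F_p]_(M, d n))
         (W : forall n, 'I_(D n) -> 'M['F_p]_(d n, h))
         (Z : forall n, 'I_(D n) -> 'I_T -> 'M['F_p]_(M %/ K, d n))
         (V : forall n, 'I_(D n) -> 'I_T -> 'M['F_p]_(d n, h)),
  dec (fun n' => if n' \in U then Htilde beta alpha X W Z V B n' else 0)
  = Hbar X W B.
Proof.
move=> pp N0 K0 T0 M0 h0 KM beta alpha ib ia nab B U hU.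
exists (fun H => stackK (fun k : 'I_K =>
  \sum_(u <- enum U) ell (enum U) alpha u (beta (lshift T k)) *: H u)).
move=> D d D0 d0 X W Z V.
apply/matrixP => q j.
rewrite /Hbar /stackK mxE summxE summxE.
set k := Ordinal (stack_div_lt q); set r := Ordinal (stack_mod_lt q).
pose f x := (\sum_(n < N) \sum_(i < D n)
   subrows B (Fpoly beta X Z i x) *m Gpoly beta W V i x) r j.
have Pf : PF #|U| f.
  have H : MPF (K + T + (K + T)).-1 (fun x => \sum_(n < N) \sum_(i < D n)
   subrows B (Fpoly beta X Z i x) *m Gpoly beta W V i x).
    apply: MPF_sum => n; apply: MPF_sum => i; apply: MPF_mul.
      apply: MPF_subrows; apply: MPF_add; apply: MPF_sum => t; apply: MPF_scl; apply: PF_Lk.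
    apply: MPF_add; apply: MPF_sum => t; apply: MPF_scl; apply: PF_Lk.
  apply: PF_mono (H r j); lia.
have [qq [sq hq]] := Pf.
have E := interp (beta (lshift T k)) (enum_uniq (mem U)) ia (leq_trans sq (eq_leq (cardE U))).
have FP : forall n (i : 'I_(D n)),
    Fpoly beta X Z i (beta (lshift T k)) = row_block (M %/ K) (X n i) k.
  move=> n i; rewrite /Fpoly (bigD1 k) //= Lk_delta // eqxx scale1r.
  rewrite big1 ?addr0; last first.
    by move=> k' nk; rewrite Lk_delta // eq_lshift eq_sym (negbTE nk) scale0r.
  by rewrite big1 ?addr0 // => t _; rewrite Lk_delta // eq_lrshift scale0r.
have GP : forall n (i : 'I_(D n)), Gpoly beta W V i (beta (lshift T k)) = W n i.
  move=> n i; rewrite /Gpoly (bigD1 k) //= Lk_delta // eqxx scale1r.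
  rewrite big1 ?addr0; last first.
    by move=> k' nk; rewrite Lk_delta // eq_lshift eq_sym (negbTE nk) scale0r.
  by rewrite big1 ?addr0 // => t _; rewrite Lk_delta // eq_lrshift scale0r.
rewrite big_seq (eq_bigr (fun u => qq.[alpha u] * ell (enum U) alpha u (beta (lshift T k)))); last first.
  by move=> u; rewrite mem_enum => uU; rewrite uU mxE -hq mulrC.
rewrite -big_seq -E -hq /f summxE; apply: eq_bigr => n _.
rewrite /Hbar_n /stackK mxE -/k -/r.
apply: (congr1 (fun A : 'M_(_, _) => A r j)); apply: eq_bigr => i _.
by rewrite FP GP.
Qed.
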